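(* Let $G=K(n_1,\dots,n_s)$ be a complete $s$-partite graph ($s\ge 2$) with $1\le n_j\le 2$ for all $j\in\{1,\dots,s\}$. Then $\chi_3(G)=\left\lceil \frac{n_1+n_2+\cdots+n_s}{4}\right\rceil$.
   Context: $K(n_1,\dots,n_s)$ denotes the complete $s$-partite graph whose parts have $n_1,\dots,n_s$ vertices. A map $f:V(G)\to\{1,\dots,k\}$ is a $3$-relaxed $k$-coloring if every vertex $u$ has at most $3$ neighbors $v$ with $f(v)=f(u)$; $\chi_3(G)$ is the minimum $k$ for which such a coloring exists. *)

(* Defs.v *)
From mathcomp Require Import all_boot.
Set Implicit Arguments. Unset Strict Implicit. Unset Printing Implicit Defensive.

(* f : T -> 'I_k  (colors {0,..,k-1} stand for {1,..,k}) is a 3-relaxed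
   k-coloring if every vertex has at most 3 neighbours of its own color. *)
Definition relaxed3_coloring (T : finType) (adj : rel T) (k : nat)
  (f : T -> 'I_k) : Prop :=
  forall u : T, #|[set v | adj u v & f v == f u]| <= 3.

Definition relaxed3_colorable (T : finType) (adj : rel T) (k : nat) : Prop :=
  exists f : T -> 'I_k, relaxed3_coloring adj f.

Definition is_chi3 (T : finType) (adj : rel T) (m : nat) : Prop :=
  relaxed3_colorable adj m /\ forall k, relaxed3_colorable adj k -> m <= k.

(* Complete s-partite graph K(n_1,...,n_s): vertices are pairs (i, a) with
   a < n i, and two vertices are adjacent iff they lie in different parts. *)
Definition cmp_vertex (s : nat) (n : 'I_s -> nat) : finType :=
  {i : 'I_s & 'I_(n i)}.

Definition cmp_adj (s : nat) (n : 'I_s -> nat) : rel (cmp_vertex n) :=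
  fun u v => tag u != tag v.

Definition ceil_div (a b : nat) : nat := (a + b.-1) %/ b.

(* Main.v *)
Require Import Defs.
From mathcomp Require Import all_boot.
From mathcomp Require Import zify.

Lemma card_cmp (s : nat) (n : 'I_s -> nat) :
  #|{: cmp_vertex n}| = \sum_(j < s) n j.
Proof.
rewrite /cmp_vertex card_tagged sumnE big_map big_enum /=.
by apply: eq_bigr => i _; rewrite card_ord.
Qed.

Lemma part_card (s : nat) (n : 'I_s -> nat) (i : 'I_s) (A : {set cmp_vertex n}) :
  #|[set v in A | tag v == i]| <= n i.
Proof.
apply: (@leq_trans #|(fun a : 'I_(n i) => (Tagged (fun j => 'I_(n j)) a : cmp_vertex n)) @: [set: 'I_(n i)]|).
  apply: subset_leq_card; apply/subsetP => -[j a]; rewrite inE /= => /andP [_ /eqP Hj].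
  subst j; apply/imsetP; exists a => //; by rewrite inE.
by apply: (leq_trans (leq_imset_card _ _)); rewrite cardsT card_ord.
Qed.

Theorem lemma5p6 (s : nat) (n : 'I_s -> nat) :
  2 <= s ->
  (forall j : 'I_s, 1 <= n j <= 2) ->
  is_chi3 (@cmp_adj s n) (ceil_div (\sum_(j < s) n j) 4).
Proof.
move=> hs hn; set N := \sum_(j < s) n j.
have cardT : #|{: cmp_vertex n}| = N by rewrite card_cmp.
rewrite /ceil_div /=; split.
- have Hf : forall v : cmp_vertex n, enum_rank v %/ 4 < (N + 3) %/ 4.
    move=> v; have : (enum_rank v : nat) < N.
      by rewrite -cardT; apply: ltn_ord.
    move: (nat_of_ord (enum_rank v)) => r h. lia.
  exists (fun v => Ordinal (Hf v)) => u.
  set A := [set v | (Ordinal (Hf v)) == Ordinal (Hf u)].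
  have cA : #|A| <= 4.
    pose g := fun v : cmp_vertex n => Ordinal (@ltn_pmod (enum_rank v) 4 isT).
    rewrite -(@card_in_imset _ _ g A).
      by apply: (leq_trans (max_card _)); rewrite card_ord.
    move=> x y; rewrite !inE => /eqP hx /eqP hy /(congr1 val) /= hm.
    have hx' := congr1 val hx; have hy' := congr1 val hy; simpl in hx', hy'.
    apply: enum_rank_inj; apply: val_inj => /=.
    by rewrite (divn_eq (enum_rank x) 4) (divn_eq (enum_rank y) 4) hx' hy' hm.
  have sub : [set v | cmp_adj u v & Ordinal (Hf v) == Ordinal (Hf u)] \subset A :\ u.
    apply/subsetP => v; rewrite !inE /cmp_adj => /andP [h1 ->]; rewrite andbT.
    by apply/eqP => E; rewrite E eqxx in h1.
  apply: (leq_trans (subset_leq_card sub)).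
  have uA : u \in A by rewrite inE.
  move: cA; rewrite (cardsD1 u A) uA; lia.
- move=> k [f Hf].
  have cls : forall c : 'I_k, #|[set v | f v == c]| <= 4.
    move=> c; set A := [set v | f v == c].
    have key : forall u, u \in A ->
        #|A| = #|[set v | cmp_adj u v & f v == f u]| + #|[set v in A | tag v == tag u]|.
      move=> u uA; rewrite -(cardsID [set v | tag v == tag u] A) addnC; congr (_ + _).
        apply: eq_card => v; move: uA; rewrite !inE /cmp_adj => /eqP ->.
        by rewrite eq_sym.
      by apply: eq_card => v; rewrite !inE.
    case: (leqP #|A| 4) => // big.
    have [u uA] : exists u, u \in A.
      by apply/set0Pn; rewrite -card_gt0; lia.
    have HA : forall u, u \in A -> #|A| <= 5 /\ (#|A| = 5 -> #|[set v in A | tag v == tag u]| = 2).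
      move=> w wA; have := key w wA; have := Hf w; have := @part_card s n (tag w) A.
      have := hn (tag w); lia.
    have [A5 _] := HA u uA.
    have e5 : #|A| = 5 by lia.
    have : 2 %| #|A|.
      have -> : #|A| = \sum_(i < s) #|[set v in A | tag v == i]|.
        rewrite -sum1_card (partition_big (fun v : cmp_vertex n => tag v) predT) //=.
        apply: eq_bigr => i _; rewrite -sum1_card; apply: eq_bigl => v.
        by rewrite !inE.
      apply: dvdn_sum => i _.
      case: (set_0Vmem [set v in A | tag v == i]) => [-> | [w]]; first by rewrite cards0.
      rewrite inE => /andP [wA /eqP <-].
      by have [_ ->] := HA w wA.
    by rewrite e5.
  have : N <= 4 * k.
    rewrite -cardT -sum1_card (partition_big f predT) //=.
    apply: (@leq_trans (\sum_(c < k) 4)); last by rewrite sum_nat_const card_ord mulnC.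
    apply: leq_sum => c _; rewrite sum1_card.
    by apply: leq_trans (cls c); apply: subset_leq_card; apply/subsetP => v; rewrite !inE.
  lia.
Qed.
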